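(* Let $n$ training samples carry labels in $\{1,\dots,K\}$ with indicator matrix $F\in\mathbb{R}^{K\times n}$, $n_k$ samples in class $k$. Let the basis $G_1,\dots,G_r$ ($r\le n$) be a subset of the training samples, with $r_k\ge1$ basis vectors in class $k$, and let $F_{G_i}$ be the class indicator of $G_i$. Let $W\in\mathbb{R}^{r\times n}$ be entrywise nonnegative with positive column sums, $S=\operatorname{diag}(\mathbf{1}^TW)$, $\tilde W=WS^{-1}$ of full row rank, $X^*=F\tilde W^T(\tilde W\tilde W^T)^{-1}$, and assume $F\tilde W^T\neq0$. Define the fitting error $\epsilon=\|F-X^*\tilde W\|_F^2/\|X^*\tilde W\|_F^2+1$ and the spectral risk $\gamma=\|X^*\|_F^2\|\tilde W\|_F^2/\|X^*\tilde W\|_F^2$. If $W_{ij}=0$ whenever $F_{G_i}\neq F_j$ (ideal bipartite-graph condition), then $\epsilon=1$ and $$\frac{r}{n}\sum_{k=1}^K\frac{n_k}{r_k}\le\gamma\le r.$$ The upper bound is attained when every column of $\tilde W$ has exactly one nonzero entry; the lower bound is attained if and only if $r_k=1$ for all $k$.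
   Context: The columns of $F$ are standard basis vectors of $\mathbb{R}^K$: $F_j=e_k$ iff sample $j$ is in class $k$. $W_{ij}$ is the similarity between basis vector $G_i$ and training sample $j$; each column of $\tilde W$ sums to one. $X^*$ minimizes $\|F-X\tilde W\|_F^2$. *)

(* Defs.v *)
From mathcomp Require Import all_boot all_order all_algebra.
Set Implicit Arguments. Unset Strict Implicit. Unset Printing Implicit Defensive.
Import Order.TTheory GRing.Theory Num.Theory.
Local Open Scope ring_scope.

Definition indicator (R : ringType) (K n : nat) (lab : 'I_n -> 'I_K) : 'M[R]_(K, n) :=
  \matrix_(k < K, j < n) (if lab j == k then 1 else 0).

Definition frob2 (R : ringType) (m n : nat) (A : 'M[R]_(m, n)) : R :=
  \sum_(i < m) \sum_(j < n) A i j ^+ 2.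

Definition colsum (R : ringType) (r n : nat) (W : 'M[R]_(r, n)) (j : 'I_n) : R :=
  \sum_(i < r) W i j.

Definition Wnorm (R : fieldType) (r n : nat) (W : 'M[R]_(r, n)) : 'M[R]_(r, n) :=
  W *m invmx (diag_mx (\row_j colsum W j)).

Definition Xstar (R : fieldType) (K r n : nat) (F : 'M[R]_(K, n)) (Wt : 'M[R]_(r, n))
  : 'M[R]_(K, r) := F *m Wt^T *m invmx (Wt *m Wt^T).

Definition fit_error (R : fieldType) (K r n : nat) (F : 'M[R]_(K, n)) (Wt : 'M[R]_(r, n)) : R :=
  frob2 (F - Xstar F Wt *m Wt) / frob2 (Xstar F Wt *m Wt) + 1.

Definition spectral_risk (R : fieldType) (K r n : nat) (F : 'M[R]_(K, n)) (Wt : 'M[R]_(r, n)) : R :=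
  frob2 (Xstar F Wt) * frob2 Wt / frob2 (Xstar F Wt *m Wt).

(* n_k: number of training samples in class k;  r_k: number of basis vectors in class k
   (basis vector G_i is training sample g i). *)
Definition ncount (K n : nat) (lab : 'I_n -> 'I_K) (k : 'I_K) : nat := #|[pred j | lab j == k]|.
Definition rcount (K n r : nat) (lab : 'I_n -> 'I_K) (g : 'I_r -> 'I_n) (k : 'I_K) : nat :=
  #|[pred i | lab (g i) == k]|.

(* Main.v *)
Require Import Defs.
From mathcomp Require Import all_boot all_order all_algebra.
From mathcomp Require Import ring lra.
Import Order.TTheory GRing.Theory Num.Theory.
Local Open Scope ring_scope.

Lemma Wnorm_E (R : realFieldType) (r n : nat) (W : 'M[R]_(r, n)) :
  (forall j, 0 < colsum W j) -> forall i j, Wnorm W i j = W i j / colsum W j.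
Proof.
move=> hc i j.
set D := diag_mx (\row_j0 colsum W j0).
set D' := diag_mx (\row_j0 (colsum W j0)^-1).
have hDD : D *m D' = 1%:M.
  rewrite /D /D' mulmx_diag -diag_const_mx; congr diag_mx.
  apply/matrixP => a b; rewrite !mxE mulfV //; exact: lt0r_neq0.
have hU : D \in unitmx.
  rewrite unitmxE det_diag unitfE; apply/prodf_neq0 => b _.
  rewrite mxE; exact: lt0r_neq0.
rewrite /Wnorm -/D.
have -> : invmx D = D' by rewrite -[D']mul1mx -(mulVmx hU) -mulmxA hDD mulmx1.
by rewrite mul_mx_diag !mxE.
Qed.

Lemma frob2_ind (R : realFieldType) (K m : nat) (f : 'I_m -> 'I_K) :
  frob2 (indicator R f) = m%:R.
Proof.
rewrite /frob2 exchange_big /=.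
rewrite (eq_bigr (fun _ => 1)) ?sumr_const ?card_ord // => j _.
rewrite (bigD1 (f j)) //= mxE eqxx expr1n big1 ?addr0 // => k hk.
by rewrite mxE eq_sym (negbTE hk) expr0n.
Qed.

Lemma col_decomp (R : realFieldType) (r : nat) (x : 'I_r -> R) (P : pred 'I_r) :
  (forall i, ~~ P i -> x i = 0) -> \sum_i x i = 1 -> (0 < #|P|)%N ->
  \sum_i x i ^+ 2 = (#|P|%:R)^-1 + \sum_(i in P) (x i - (#|P|%:R)^-1) ^+ 2.
Proof.
move=> hz h1 hP.
set a := (#|P|%:R)^-1.
have hm : (#|P|%:R : R) != 0 by rewrite pnatr_eq0 -lt0n.
have eP : forall f : 'I_r -> R, (forall i, ~~ P i -> f i = 0) ->
    \sum_(i in P) f i = \sum_i f i.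
  move=> f hf; rewrite [RHS](bigID P) /= [X in _ + X]big1 ?addr0 //.
have e1 : \sum_(i in P) x i = 1 by rewrite eP.
have e2 : \sum_(i in P) x i ^+ 2 = \sum_i x i ^+ 2
  by rewrite eP // => i /hz ->; rewrite expr0n.
rewrite [X in _ = _ + X](eq_bigr (fun i => x i ^+ 2 - (a * 2) * x i + a ^+ 2)); last first.
  by move=> i _; ring.
rewrite big_split /= sumrB -mulr_sumr e1 e2 sumr_const -mulr_natr /a.
by field.
Qed.

Lemma sum_lab (R : realFieldType) (K n : nat) (lab : 'I_n -> 'I_K) (f : 'I_K -> R) :
  \sum_j f (lab j) = \sum_k (ncount lab k)%:R * f k.
Proof.
rewrite (partition_big lab predT) //=; apply: eq_bigr => k _.
rewrite (eq_bigr (fun _ => f k)); last by move=> j /eqP ->.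
by rewrite sumr_const mulr_natl.
Qed.

Lemma Xstar_E (R : fieldType) (K r n : nat) (E : 'M[R]_(K, r)) (Wt : 'M[R]_(r, n)) :
  Wt *m Wt^T \in unitmx -> Xstar (E *m Wt) Wt = E.
Proof. by move=> hU; rewrite /Xstar -!mulmxA (mulmxA Wt) mulmxV // mulmx1. Qed.

Theorem theorem4 (R : realFieldType) (K n r : nat)
  (lab : 'I_n -> 'I_K) (g : 'I_r -> 'I_n) (W : 'M[R]_(r, n)) :
  injective g ->
  (forall k : 'I_K, (1 <= rcount lab g k)%N) ->
  (forall i j, 0 <= W i j) ->
  (forall j, 0 < colsum W j) ->
  \rank (Wnorm W) = r ->
  indicator R lab *m (Wnorm W)^T != 0 ->
  (forall i j, lab (g i) != lab j -> W i j = 0) ->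
  [/\ fit_error (indicator R lab) (Wnorm W) = 1,
      r%:R / n%:R * \sum_(k < K) ((ncount lab k)%:R / (rcount lab g k)%:R)
        <= spectral_risk (indicator R lab) (Wnorm W),
      spectral_risk (indicator R lab) (Wnorm W) <= r%:R,
      (forall j, #|[pred i | Wnorm W i j != 0]| = 1%N) ->
        spectral_risk (indicator R lab) (Wnorm W) = r%:R
    & spectral_risk (indicator R lab) (Wnorm W)
        = r%:R / n%:R * \sum_(k < K) ((ncount lab k)%:R / (rcount lab g k)%:R)
      <-> (forall k, rcount lab g k = 1%N)].
Proof.
move=> _ hrc hW0 hcs hrk hne hWz.
set Wt := Wnorm W.
have hWt := @Wnorm_E R r n W hcs.
have hWt0 : forall i j, 0 <= Wt i j.
  by move=> i j; rewrite hWt divr_ge0 // ltW.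
have hcol : forall j, \sum_i Wt i j = 1.
  move=> j; rewrite (eq_bigr (fun i => W i j / colsum W j)); last by move=> i _; exact: hWt.
  by rewrite -mulr_suml -/(colsum W j) mulfV // lt0r_neq0.
have hz : forall i j, lab (g i) != lab j -> Wt i j = 0.
  by move=> i j h; rewrite hWt hWz // mul0r.
set E := indicator R (fun i => lab (g i)).
have hF : E *m Wt = indicator R lab.
  apply/matrixP => k j; rewrite !mxE.
  have [hk|hk] := eqVneq (lab j) k.
    rewrite -(hcol j); apply: eq_bigr => i _; rewrite mxE.
    case: eqP => [_|h]; first by rewrite mul1r.
    by rewrite mul0r hz // hk; apply/eqP.
  apply: big1 => i _; rewrite mxE; case: eqP => [h|_]; last by rewrite mul0r.
  by rewrite hz ?mulr0 // h eq_sym.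
have hfree : row_free Wt by rewrite /row_free hrk.
have hunit : Wt *m Wt^T \in unitmx.
  rewrite -row_free_unit; apply: inj_row_free => v hv.
  apply/eqP; rewrite -(mulmx_free_eq0 _ hfree); apply/eqP.
  set u := v *m Wt.
  have hu : u *m u^T = 0 by rewrite trmx_mul mulmxA /u -(mulmxA v) hv mul0mx.
  have hs : \sum_j u 0 j ^+ 2 = 0.
    have := congr1 (fun M : 'M_1 => M 0 0) hu; rewrite /= !mxE => h; rewrite -[RHS]h.
    by apply: eq_bigr => j _; rewrite !mxE expr2.
  have h := psumr_eq0P (fun i _ => sqr_ge0 (u 0 i)) hs.
  apply/matrixP => a j; rewrite ord1 [RHS]mxE.
  by apply/eqP; rewrite -sqrf_eq0; apply/eqP; apply: h.
have hX : Xstar (indicator R lab) Wt = E.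
  by rewrite -hF Xstar_E.
have r_gt0 : (0 < r)%N.
  case: (ltnP 0 r) => // hr; case/eqP: hne; apply/matrixP => k i.
  by have := leq_trans (ltn_ord i) hr.
have n_gt0 : (0 < n)%N by exact: leq_ltn_trans (ltn_ord (g (Ordinal r_gt0))).
have hfE : frob2 E = r%:R := frob2_ind _ _ _ _.
have hfF : frob2 (indicator R lab) = n%:R := frob2_ind _ _ _ _.
have hn0 : (n%:R : R) != 0 by rewrite pnatr_eq0 -lt0n.
have hr0 : (r%:R : R) != 0 by rewrite pnatr_eq0 -lt0n.
have hgam : spectral_risk (indicator R lab) Wt = r%:R / n%:R * frob2 Wt.
  by rewrite /spectral_risk hX hF hfE hfF mulrAC.
have hfW : frob2 Wt = \sum_j \sum_i Wt i j ^+ 2 by rewrite /frob2 exchange_big.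
set D := fun j => \sum_(i in [pred i | lab (g i) == lab j])
   (Wt i j - (rcount lab g (lab j))%:R^-1) ^+ 2.
have hdec : forall j, \sum_i Wt i j ^+ 2 = (rcount lab g (lab j))%:R^-1 + D j.
  move=> j; apply: (@col_decomp R r (fun i => Wt i j) [pred i | lab (g i) == lab j]).
  - by move=> i /= h; apply: hz.
  - exact: hcol.
  - exact: hrc.
have D_ge0 : forall j, 0 <= D j by move=> j; apply: sumr_ge0 => i _; exact: sqr_ge0.
set S := \sum_(k < K) ((ncount lab k)%:R / (rcount lab g k)%:R).
have hS : \sum_j (rcount lab g (lab j))%:R^-1 = S.
  by rewrite (@sum_lab R K n lab (fun k => (rcount lab g k)%:R^-1)).
have hfWS : frob2 Wt = S + \sum_j D j.
  by rewrite hfW (eq_bigr _ (fun j _ => hdec j)) big_split /= hS.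
have hle1 : forall j, \sum_i Wt i j ^+ 2 <= 1.
  move=> j; rewrite -(hcol j); apply: ler_sum => i _.
  have hx1 : Wt i j <= 1.
    rewrite -(hcol j) (bigD1 i) //= lerDl; apply: sumr_ge0 => i' _; exact: hWt0.
  have := hWt0 i j; nra.
have hfWn : frob2 Wt <= n%:R.
  rewrite hfW -[n in n%:R]card_ord -sumr_const; apply: ler_sum => j _; exact: hle1.
have hrn0 : 0 <= (r%:R : R) / n%:R by apply: divr_ge0; apply: ler0n.
have hSD : 0 <= \sum_j D j by apply: sumr_ge0 => j _; exact: D_ge0.
split.
- rewrite /fit_error hX hF subrr.
  have -> : frob2 (0 : 'M[R]_(K, n)) = 0.
    by rewrite /frob2 big1 // => k _; rewrite big1 // => j _; rewrite mxE expr0n.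
  by rewrite mul0r add0r.
- by rewrite hgam hfWS ler_wpM2l // lerDl.
- rewrite hgam; apply: le_trans (ler_wpM2l hrn0 hfWn) _.
  by rewrite divfK.
- move=> hone; rewrite hgam.
  suff -> : frob2 Wt = n%:R by rewrite divfK.
  rewrite hfW -[n in n%:R]card_ord -sumr_const; apply: eq_bigr => j _.
  have /card1P [i0 hi0] := introT eqP (hone j).
  have h0 : forall i, i != i0 -> Wt i j = 0.
    move=> i hi; move: (hi0 i); rewrite !inE (negbTE hi) => /negbT.
    by rewrite negbK => /eqP.
  have hx : Wt i0 j = 1.
    rewrite -(hcol j) (bigD1 i0) //= big1 ?addr0 // => i; exact: h0.
  rewrite (bigD1 i0) //= big1 ?addr0 ?hx ?expr1n // => i hi.
  by rewrite h0 // expr0n.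
split.
- move=> heq.
  have hSD0 : \sum_j D j = 0.
    move: heq; rewrite hgam hfWS => /(mulfI _) h.
    have {}h := h (mulf_neq0 hr0 (invr_neq0 hn0)).
    lra.
  have hD0 := psumr_eq0P (fun j _ => D_ge0 j) hSD0.
  have hval : forall i j, lab (g i) == lab j -> Wt i j = (rcount lab g (lab j))%:R^-1.
    move=> i j hij.
    have := @psumr_eq0P R _ (fun i => i \in [pred i | lab (g i) == lab j])
      (fun i => (Wt i j - (rcount lab g (lab j))%:R^-1) ^+ 2)
      (fun i _ => sqr_ge0 _) (hD0 j isT) i.
    rewrite inE hij => /(_ isT) /eqP.
    by rewrite sqrf_eq0 subr_eq0 => /eqP.
  move=> k; apply/eqP; rewrite eqn_leq hrc andbT leqNgt; apply/negP.
  move=> /card_gt1P [i1 [i2 [h1 h2 h12]]].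
  rewrite !inE in h1 h2.
  set v := (delta_mx 0 i1 - delta_mx 0 i2 : 'rV[R]_r).
  have hv : v *m Wt = 0.
    rewrite mulmxBl -!rowE; apply/matrixP => a j; rewrite [RHS]mxE.
    have -> : (row i1 Wt - row i2 Wt) a j = Wt i1 j - Wt i2 j by rewrite !mxE.
    have [hk|hk] := eqVneq (lab j) k.
      by rewrite !hval ?subrr // hk.
    by rewrite !hz ?subrr // ?(eqP h1) ?(eqP h2) eq_sym.
  move/eqP: hv; rewrite (mulmx_free_eq0 _ hfree) => /eqP hv.
  have := congr1 (fun M : 'rV[R]_r => M 0 i1) hv.
  rewrite /v !mxE !eqxx (negbTE h12) /= subr0 => /eqP.
  by rewrite oner_eq0.
- move=> hall.
  have hSn : S = n%:R.
    rewrite -hS -[n in n%:R]card_ord -sumr_const; apply: eq_bigr => j _.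
    by rewrite hall invr1.
  have hfn : frob2 Wt = n%:R.
    by apply/le_anti; rewrite hfWn /= hfWS -hSn lerDl.
  by rewrite hgam hfn hSn.
Qed.
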